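(* Let $\Delta\ge2$ be an integer and for $\alpha\in(0,1)$ set $f_\alpha(r,s)=\dfrac{2r^\alpha}{r^\alpha+(\Delta-1)s^\alpha}$ for $r,s>0$. There exists $\varepsilon_0>0$ such that for every $\varepsilon\in(0,\varepsilon_0)$, with $\alpha=1/2+\varepsilon$, and all $0<a<2/\Delta<b<2$, we have $f_\alpha(a,b)>a$ or $f_\alpha(b,a)<b$. *)

(* Defs.v *)
From Stdlib Require Import Reals.
Open Scope R_scope.

Definition f_alpha (Delta : nat) (alpha r s : R) : R :=
  2 * Rpower r alpha / (Rpower r alpha + (INR Delta - 1) * Rpower s alpha).

(* Main.v *)
Require Import Defs.
From Stdlib Require Import Reals Lra Lia.
Open Scope R_scope.

Lemma exp_INR_mul (n : nat) (t : R) : exp (INR n * t) = exp t ^ n.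
Proof.
  induction n as [|n IH].
  - simpl. rewrite Rmult_0_l. apply exp_0.
  - rewrite S_INR, Rmult_plus_distr_r, Rmult_1_l, exp_plus, IH. simpl. ring.
Qed.

Lemma pow_ineq (n : nat) (y : R) : 1 < y -> y ^ n - (/ y) ^ n >= INR n * (y - / y).
Proof.
  intros Hy.
  assert (Hz : 0 < / y < 1).
  { split. apply Rinv_0_lt_compat; lra. rewrite <- Rinv_1. apply Rinv_lt_contravar; lra. }
  assert (Hyz : y * / y = 1) by (field; lra).
  set (z := / y) in *.
  induction n as [|n IH].
  - simpl. lra.
  - rewrite S_INR. simpl.
    assert (H1 : 1 <= y ^ n) by (apply pow_R1_Rle; lra).
    assert (Hp : y ^ n * z ^ n = 1) by (rewrite <- Rpow_mult_distr, Hyz; apply pow1).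
    assert (H2 : 0 < z ^ n <= 1).
    { assert (0 < z ^ n) by (apply pow_lt; lra). split; [lra|]. nra. }
    assert (y * y ^ n - z * z ^ n - (y ^ n - z ^ n) >= y - z).
    { assert (E : (1 - z) * (1 - z ^ n) = (y - 1) * (y ^ n - 1) * (z * z ^ n)).
      { transitivity (((y - 1) * z) * ((y ^ n - 1) * z ^ n)); [|ring].
        replace ((y - 1) * z) with (1 - z) by (rewrite Rmult_minus_distr_r, Hyz; ring).
        replace ((y ^ n - 1) * z ^ n) with (1 - z ^ n) by (rewrite Rmult_minus_distr_r, Hp; ring).
        reflexivity. }
      assert (0 <= (y - 1) * (y ^ n - 1)) by (apply Rmult_le_pos; lra).
      assert (z * z ^ n <= 1) by nra.
      nra. }
    lra.
Qed.
Lemma key (n : nat) (e p q : R) : (1 <= n)%nat -> 0 < e -> 2 * e * INR n < 1 -> p < q ->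
  (exp q - exp p) * exp ((1/2 + e) * p + (1/2 + e) * q) >
  INR n * (exp (p + 2 * (1/2 + e) * q) - exp (q + 2 * (1/2 + e) * p)).
Proof.
  intros Hn He Hen Hpq.
  set (m := (p + q) / 2). set (h := (q - p) / 2).
  set (K := exp (2 * m + 2 * e * m)).
  assert (HK : 0 < K) by apply exp_pos.
  assert (E1 : exp q * exp ((1/2 + e) * p + (1/2 + e) * q) = K * exp h).
  { unfold K; rewrite <- !exp_plus; f_equal; unfold m, h; field. }
  assert (E2 : exp p * exp ((1/2 + e) * p + (1/2 + e) * q) = K * exp (- h)).
  { unfold K; rewrite <- !exp_plus; f_equal; unfold m, h; field. }
  assert (E3 : exp (p + 2 * (1/2 + e) * q) = K * exp (2 * e * h)).
  { unfold K; rewrite <- !exp_plus; f_equal; unfold m, h; field. }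
  assert (E4 : exp (q + 2 * (1/2 + e) * p) = K * exp (- (2 * e * h))).
  { unfold K; rewrite <- !exp_plus; f_equal; unfold m, h; field. }
  rewrite Rmult_minus_distr_r, E1, E2, E3, E4.
  assert (HnR : 1 <= INR n) by (apply (le_INR 1); lia).
  set (t := h / INR n).
  assert (Hh : 0 < h) by (unfold h; lra).
  assert (Ht : 0 < t) by (unfold t; apply Rdiv_lt_0_compat; lra).
  assert (Hht : h = INR n * t) by (unfold t; field; lra).
  assert (Het : 2 * e * h < t).
  { rewrite Hht. replace (2 * e * (INR n * t)) with ((2 * e * INR n) * t) by ring. nra. }
  set (y := exp t).
  assert (Hy : 1 < y) by (unfold y; rewrite <- exp_0; apply exp_increasing; lra).
  assert (Eh : exp h = y ^ n) by (rewrite Hht; apply exp_INR_mul).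
  assert (Emh : exp (- h) = (/ y) ^ n) by (rewrite exp_Ropp, Eh, pow_inv; reflexivity).
  assert (L1 : exp (2 * e * h) < y) by (apply exp_increasing; lra).
  assert (L2 : / y < exp (- (2 * e * h))) by (unfold y; rewrite <- exp_Ropp; apply exp_increasing; lra).
  pose proof (pow_ineq n y Hy) as P.
  rewrite Eh, Emh.
  assert (INR n * (exp (2 * e * h) - exp (- (2 * e * h))) < INR n * (y - / y)).
  { apply Rmult_lt_compat_l; lra. }
  nra.
Qed.

Theorem mainTheorem9 (Delta : nat) (HDelta : (2 <= Delta)%nat) :
  exists eps0 : R, 0 < eps0 /\
    forall eps : R, 0 < eps < eps0 ->
      forall a b : R, 0 < a -> a < 2 / INR Delta -> 2 / INR Delta < b -> b < 2 ->
        f_alpha Delta (1/2 + eps) a b > a \/ f_alpha Delta (1/2 + eps) b a < b.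
Proof.
  set (n := (Delta - 1)%nat).
  assert (Hn : (1 <= n)%nat) by (unfold n; lia).
  assert (HnR : 1 <= INR n) by (apply (le_INR 1); lia).
  assert (HD : INR Delta - 1 = INR n).
  { unfold n; rewrite minus_INR by lia; simpl; ring. }
  exists (/ (2 * INR n)). split.
  { apply Rinv_0_lt_compat; lra. }
  intros eps [He1 He2] a b Ha Ha2 Hb2 Hb.
  assert (Hen : 2 * eps * INR n < 1).
  { assert (eps * (2 * INR n) < / (2 * INR n) * (2 * INR n)) by (apply Rmult_lt_compat_r; lra).
    rewrite Rinv_l in H by lra. lra. }
  assert (Hab : a < b) by lra.
  assert (Hb0 : 0 < b) by lra.
  destruct (Rlt_or_le a (f_alpha Delta (1/2 + eps) a b)) as [H1|H1]; [left; lra|].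
  destruct (Rlt_or_le (f_alpha Delta (1/2 + eps) b a) b) as [H2|H2]; [right; lra|].
  exfalso.
  unfold f_alpha, Rpower in H1, H2. rewrite HD in H1, H2.
  set (p := ln a) in *. set (q := ln b) in *.
  assert (Hpq : p < q) by (apply ln_increasing; lra).
  assert (Ea : a = exp p) by (unfold p; rewrite exp_ln; lra).
  assert (Eb : b = exp q) by (unfold q; rewrite exp_ln; lra).
  set (al := 1/2 + eps) in *.
  set (A := exp (al * p)) in *. set (B := exp (al * q)) in *.
  assert (HA : 0 < A) by apply exp_pos. assert (HB : 0 < B) by apply exp_pos.
  assert (G1 : 2 * A <= a * (A + INR n * B)).
  { assert (0 < A + INR n * B) by nra.
    apply (Rmult_le_compat_r (A + INR n * B)) in H1; [|lra].
    unfold Rdiv in H1. rewrite Rmult_assoc, Rinv_l in H1 by lra. lra. }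
  assert (G2 : b * (B + INR n * A) <= 2 * B).
  { assert (0 < B + INR n * A) by nra.
    apply (Rmult_le_compat_r (B + INR n * A)) in H2; [|lra].
    unfold Rdiv in H2. rewrite Rmult_assoc, Rinv_l in H2 by lra. lra. }
  assert (G : (b - a) * (A * B) <= INR n * (a * (B * B) - b * (A * A))) by nra.
  pose proof (key n eps p q Hn He1 Hen Hpq) as K. fold al in K.
  assert (E1 : exp (al * p + al * q) = A * B) by (unfold A, B; apply exp_plus).
  assert (E2 : exp (p + 2 * al * q) = a * (B * B)).
  { rewrite Ea; unfold B; rewrite <- !exp_plus; f_equal; ring. }
  assert (E3 : exp (q + 2 * al * p) = b * (A * A)).
  { rewrite Eb; unfold A; rewrite <- !exp_plus; f_equal; ring. }
  rewrite E1, E2, E3, <- Ea, <- Eb in K. lra.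
Qed.
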